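(* Fix integers $q\ge 1$ and $k\ge 4$, and let $G(q,k)$ be the graph on vertex set $\{v_0,v_1,\ldots,v_{kq}\}$ in which, with all indices taken modulo $kq+1$, the neighbourhood of $v_i$ is $$\{v_{i-1},v_{i+1}\}\cup\{v_{i+kj+m} : m=2,3,\ldots,k-1,\ j=0,1,\ldots,q-1\}.$$ Then $G(q,k)$ is $(K_3+P_1)$-free.
   Context: $K_3+P_1$ denotes the disjoint union of a triangle and a single isolated vertex. A graph is $H$-free if it contains no induced subgraph isomorphic to $H$. *)

(* Defs.v *)
From mathcomp Require Import all_boot.
Set Implicit Arguments. Unset Strict Implicit. Unset Printing Implicit Defensive.

(* The graph G(q,k) on vertices v_0,...,v_{kq}, represented by 'I_(k*q+1).
   y is adjacent to x iff y is in the neighbourhood of x: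
   y = x+1, y = x-1 (= x + kq), or y = x + k*j + m with 0 <= j < q and
   2 <= m <= k-1, all indices modulo kq+1. *)
Definition Gqk_adj (q k : nat) : rel 'I_(k * q + 1) :=
  fun x y =>
    [|| val y == (val x + 1) %% (k * q + 1),
        val y == (val x + k * q) %% (k * q + 1)
      | [exists j : 'I_q, exists m : 'I_k,
           (2 <= val m) && (val y == (val x + k * val j + val m) %% (k * q + 1))]].

Definition K3P1 : rel 'I_4 :=
  fun a b => (a != b) && (val a < 3) && (val b < 3).

Definition induced_free (TH TG : finType) (H : rel TH) (G : rel TG) : Prop :=
  ~ exists f : TH -> TG, injective f /\ forall a b, G (f a) (f b) = H a b.

(* Main.v *)
Require Import Defs.
From mathcomp Require Import all_boot.
From mathcomp Require Import zify.

Lemma modk_eq k a b c d : k * a + b = k * c + d -> b < k -> d < k -> b = d.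
Proof.
move=> /(congr1 (modn^~ k)) /=; rewrite ![k * _]mulnC !modnMDl => H hb hd.
by rewrite !modn_small in H.
Qed.

Lemma modk_neq k a c d : 0 < d -> d < k -> k * a <> k * c + d.
Proof. move=> h1 h2 E; have := @modk_eq k a 0 c d; rewrite addn0 => /(_ E); lia. Qed.

Lemma modk_neq1 k a c d : 1 < k -> d != 1 -> d < k -> k * a + 1 <> k * c + d.
Proof. move=> h1 h2 h3 E; have := @modk_eq k a 1 c d E h1 h3; lia. Qed.

Lemma modcases a n : a < 2 * n -> (a < n /\ a %% n = a) \/ (n <= a /\ a %% n = a - n).
Proof.
move=> ha; case: (ltnP a n) => h; first by left; rewrite modn_small.
right; split => //.
have -> : a = (a - n) + n by rewrite subnK.
by rewrite modnDr addnK modn_small //; lia.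
Qed.

Lemma key (q k : nat) (hk : 4 <= k) (d x y : 'I_(k * q + 1)) t s e :
  t < q -> s < q -> e <= 1 -> 2 <= k * t + e -> 2 <= k * s + e ->
  (val x = val d + (k * t + e) \/ val x + (k * q + 1) = val d + (k * t + e)) ->
  (val y = val d + (k * s + e) \/ val y + (k * q + 1) = val d + (k * s + e)) ->
  ~~ Gqk_adj x y.
Proof.
move=> ht hs he h2t h2s hx hy.
have ft : k * t + k <= k * q by rewrite addnC -mulnS leq_mul2l ht orbT.
have fs : k * s + k <= k * q by rewrite addnC -mulnS leq_mul2l hs orbT.
case: x hx => x lx /= hx; case: y hy => y ly /= hy; case: d hx hy => d ld /= hx hy.
have hD1 := @modk_neq k s t 1 isT ltac:(lia). have hD2 := @modk_neq k t s 1 isT ltac:(lia).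
rewrite /Gqk_adj /=; apply/negP; case/or3P => [/eqP H | /eqP H | /existsP [j /existsP [m /andP [hm /eqP H]]]].
- have [[Ea E]|[Ea E]] := modcases (x + 1) (k * q + 1) ltac:(lia); rewrite E in H; lia.
- have [[Ea E]|[Ea E]] := modcases (x + k * q) (k * q + 1) ltac:(lia); rewrite E in H; lia.
- have lm := ltn_ord m.
  have fj : k * j + k <= k * q by rewrite addnC -mulnS leq_mul2l ltn_ord orbT.
  have hA := @modk_neq k s (t + j) m ltac:(lia) lm. have hB := @modk_neq1 k (s + q) (t + j) m ltac:(lia) ltac:(lia) lm.
  rewrite !mulnDr in hA hB.
  have [[Ea E]|[Ea E]] := modcases (x + k * j + m) (k * q + 1) ltac:(lia); rewrite E in H; lia.
Qed.

Lemma nonadj_form (q k : nat) (hq : 1 <= q) (hk : 4 <= k) (d x : 'I_(k * q + 1)) :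
  x != d -> ~~ Gqk_adj d x ->
  exists t e, [/\ t < q, e <= 1, 2 <= k * t + e &
   (val x = val d + (k * t + e) \/ val x + (k * q + 1) = val d + (k * t + e))].
Proof.
move=> /eqP xd nG.
have xd' : val x <> val d by move=> E; apply: xd; apply: val_inj.
case: x xd nG xd' => x lx xd nG /= xd'; case: d xd nG xd' => d ld xd nG /= xd'.
pose r := if d <= x then x - d else x + (k * q + 1) - d.
have hr : x = d + r \/ x + (k * q + 1) = d + r.
  rewrite /r; case: (leqP d x) => h; [left|right]; lia.
have rn : r < k * q + 1 by rewrite /r; case: (leqP d x) => h; lia.
have r0 : r <> 0 by rewrite /r; case: (leqP d x) => h; lia.
have r1 : r <> 1.
  move=> E; apply: (negP nG); rewrite /Gqk_adj /=; apply/or3P; apply: Or31; apply/eqP.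
  have [[Ea E']|[Ea E']] := modcases (d + 1) (k * q + 1) ltac:(lia); rewrite E'; lia.
have rkq : r <> k * q.
  move=> E; apply: (negP nG); rewrite /Gqk_adj /=; apply/or3P; apply: Or32; apply/eqP.
  have [[Ea E']|[Ea E']] := modcases (d + k * q) (k * q + 1) ltac:(lia); rewrite E'; lia.
have k0 : 0 < k by lia.
have rdec : r = k * (r %/ k) + r %% k by rewrite mulnC -divn_eq.
have ht : r %/ k < q by rewrite ltn_divLR // mulnC; lia.
have hm := ltn_pmod r k0.
exists (r %/ k), (r %% k); split => //; last by rewrite -rdec.
- rewrite leqNgt; apply/negP => he.
  apply: (negP nG); rewrite /Gqk_adj /=; apply/or3P; apply: Or33.
  apply/existsP; exists (Ordinal ht); apply/existsP; exists (Ordinal hm); rewrite /= he /=.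
  apply/eqP.
  have [[Ea E']|[Ea E']] := modcases (d + k * (r %/ k) + r %% k) (k * q + 1) ltac:(lia);
    rewrite E'; lia.
- lia.
Qed.

Theorem lemma2p4 (q k : nat) (hq : 1 <= q) (hk : 4 <= k) :
  @induced_free _ _ K3P1 (@Gqk_adj q k).
Proof.
move=> [f [finj Hf]].
pose o0 := @Ordinal 4 0 isT. pose o1 := @Ordinal 4 1 isT.
pose o2 := @Ordinal 4 2 isT. pose o3 := @Ordinal 4 3 isT.
have ne : forall i, i != o3 -> f i != f o3.
  by move=> i hi; apply/negP => /eqP /finj /eqP; apply/negP.
have [t0 [e0 [h0a h0b h0c h0d]]] := @nonadj_form q k hq hk _ _ (ne o0 isT) (negbT (Hf o3 o0)).
have [t1 [e1 [h1a h1b h1c h1d]]] := @nonadj_form q k hq hk _ _ (ne o1 isT) (negbT (Hf o3 o1)).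
have [t2 [e2 [h2a h2b h2c h2d]]] := @nonadj_form q k hq hk _ _ (ne o2 isT) (negbT (Hf o3 o2)).
have a01 : Gqk_adj (f o0) (f o1) by rewrite Hf.
have a02 : Gqk_adj (f o0) (f o2) by rewrite Hf.
have a12 : Gqk_adj (f o1) (f o2) by rewrite Hf.
case: (e0 =P e1) => [E|N1].
  subst e1; by move: a01; apply/negP; apply: (@key q k hk (f o3)) h0d h1d.
case: (e0 =P e2) => [E|N2].
  subst e2; by move: a02; apply/negP; apply: (@key q k hk (f o3)) h0d h2d.
have E : e1 = e2 by lia.
subst e2; by move: a12; apply/negP; apply: (@key q k hk (f o3)) h1d h2d.
Qed.
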